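(* Let $\mathcal X$ and $\mathcal Y$ be Polish spaces, let $T:\mathcal X\to\mathcal Y$ be a measurable map, and let $N:\mathcal Y\times\mathcal Y\to[0,\infty)$ be a continuous, bounded pseudo-metric on $\mathcal Y$. Define the pulled-back pseudo-metric $\tilde T(N)$ on $\mathcal X$ by $\tilde T(N)(x,x'):=N(T(x),T(x'))$. Then for all Borel probability measures $a,b$ on $\mathcal X$, $$\mathcal W(N)(T_\# a,\,T_\# b)=\mathcal W(\tilde T(N))(a,b).$$
   Context: For a pseudo-metric (cost) $c$ on a Polish space $\mathcal Z$ and Borel probability measures $\mu,\nu$ on $\mathcal Z$, the Kantorovich (Wasserstein) distance is $\mathcal W(c)(\mu,\nu):=\inf_{\pi\in U(\mu,\nu)}\int_{\mathcal Z\times\mathcal Z} c(z,z')\,d\pi(z,z')$, where $U(\mu,\nu)$ is the set of couplings, i.e. probability measures on $\mathcal Z\times\mathcal Z$ with marginals $\mu$ and $\nu$. $T_\# a$ denotes the push-forward measure $a\circ T^{-1}$. *)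

(* Defs.v *)
From HB Require Import structures.
From mathcomp Require Import all_boot all_order all_algebra.
From mathcomp Require Import all_classical all_reals all_analysis.
Set Implicit Arguments. Unset Strict Implicit. Unset Printing Implicit Defensive.
Import Order.TTheory GRing.Theory Num.Theory.
Local Open Scope classical_set_scope.
Local Open Scope ring_scope.

(* A Polish space: a complete metric space (complete pseudometric structure
   + Hausdorff) that is separable (has a countable dense subset). *)
Definition polish (R : realType) (X : completePseudoMetricType R) : Prop :=
  hausdorff_space X /\ exists D : set X, countable D /\ dense D.

Notation Borel X := (g_sigma_algebraType (@open X)).

Definition pseudometric (R : realType) (Y : Type) (N : Y -> Y -> R) : Prop :=
  (forall y y', 0 <= N y y') /\
  (forall y, N y y = 0) /\
  (forall y y', N y y' = N y' y) /\
  (forall y y' y'', N y y'' <= N y y' + N y' y'').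

Definition couplings (R : realType) d (T : measurableType d)
    (mu nu : set T -> \bar R) : set (probability (T * T)%type R) :=
  [set pi | (forall A, measurable A -> pi (A `*` setT) = mu A) /\
            (forall B, measurable B -> pi (setT `*` B) = nu B)].

Definition Wdist (R : realType) d (T : measurableType d) (c : T -> T -> R)
    (mu nu : set T -> \bar R) : \bar R :=
  ereal_inf [set (\int[pi]_z (c z.1 z.2)%:E)%E | pi in couplings mu nu].

(* Main.v *)
Require Import Defs.
From HB Require Import structures.
From mathcomp Require Import all_boot all_order all_algebra.
From mathcomp Require Import all_classical all_reals all_analysis.
From mathcomp Require Import measurable_realfun.
From mathcomp Require Import ring lra.
Import Order.TTheory GRing.Theory Num.Theory.
Local Open Scope classical_set_scope.
Local Open Scope ring_scope.

Lemma borel_open (R : realType) (Y : completePseudoMetricType R) (A : set Y) :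
  open A -> measurable (A : set (Borel Y)).
Proof. by move=> oA; apply: sub_sigma_algebra. Qed.

Lemma cont_measurable (R : realType) (Y : completePseudoMetricType R)
  (f : Y -> R^o) : continuous f -> measurable_fun [set: Borel Y] (f : Borel Y -> R).
Proof.
move=> cf; apply: (measurability _ (measurable_realfun.RGenOInfty.measurableE R)).
move=> _ [_ [x ->] <-]; rewrite setTI.
apply: borel_open; apply: open_comp; first by move=> z _; exact: cf.
rewrite set_itvoy. exact: open_gt.
Qed.

Arguments cont_measurable {R Y f}.
Section S.
Variables (R : realType) (Y : completePseudoMetricType R) (N : Y -> Y -> R).
Hypothesis hN : pseudometric N.
Hypothesis cN : continuous ((fun p : Y * Y => N p.1 p.2) : Y * Y -> R^o).

Lemma contN1 y : continuous (fun z : Y => N z y : R^o).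
Proof.
move=> z.
have : (fun z => (z, y)) x @[x --> z] --> (z, y).
  by apply: cvg_pair => //; exact: cvg_cst.
move=> h. exact: (cvg_comp _ _ h (cN (z, y))).
Qed.

Lemma contN2 y : continuous (fun z : Y => N y z : R^o).
Proof.
move=> z.
have : (fun z => (y, z)) x @[x --> z] --> (y, z).
  by apply: cvg_pair => //; exact: cvg_cst.
move=> h. exact: (cvg_comp _ _ h (cN (y, z))).
Qed.

Hypothesis hY : polish Y.
Variable y0 : Y.

Lemma dense_seq : exists d : nat -> Y, forall y e, 0 < e -> exists k, N y (d k) < e.
Proof.
case: hY => _ [D [cD dD]].
have [D0|/surjfunPex [f Df]] := pfcard_geP cD.
  have := dD setT (ex_intro _ y0 I) openT; rewrite D0 setI0.
  by case=> ? [].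
exists f => y e e0.
have oO : open [set z | N y z < e].
  by apply: (open_comp (f:=fun z => N y z : R^o)) (@open_lt _ e) => z _; exact: contN2.
have yy : N y y < e by case: hN => _ [-> _].
have [z [/= Nz Dz]] := dD _ (ex_intro _ y yy) oO.
by move: Dz; rewrite Df => -[k _ kz]; exists k; rewrite kz.
Qed.

Lemma measurable_cost :
  measurable_fun [set: (Borel Y * Borel Y)%type] (fun z : Borel Y * Borel Y => N z.1 z.2).
Proof.
have [d hd] := dense_seq.
case: hN => N0 [Nyy [Nsym Ntri]].
pose h := fun k (z : Borel Y * Borel Y) => N z.1 (d k) + N (d k) z.2.
have -> : (fun z : Borel Y * Borel Y => N z.1 z.2) = fun z => infs (h ^~ z) 0.
  apply/funext => z; apply/le_anti/andP; split.
    apply: lb_le_inf; first by exists (h 0%N z), 0%N.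
    by move=> _ [k _ <-]; exact: Ntri.
  apply/ler_addgt0Pr => e e0.
  have [k hk] := hd z.2 (e / 2) (divr_gt0 e0 (ltr0Sn _ 1)).
  have lb : has_lbound (sdrop (h ^~ z) 0).
    by exists 0 => _ [j _ <-]; rewrite addr_ge0.
  have hk' : sdrop (h ^~ z) 0 (h k z) by exists k.
  apply: (le_trans (ge_inf lb hk')).
  rewrite /h (Nsym (d k)).
  have := Ntri z.1 z.2 (d k).
  have : e / 2 + e / 2 = e by rewrite -splitr.
  move=> he hT; rewrite -he; lra.
apply: measurable_realfun.measurable_fun_infs.
  by move=> z _; exists 0 => _ [j _ <-]; rewrite addr_ge0.
move=> k; apply: measurable_realfun.measurable_funD.
  exact: (measurableT_comp (f := fun y : Borel Y => N y (d k)) (g := fst)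
    (cont_measurable (contN1 (d k))) measurable_fst).
exact: (measurableT_comp (f := fun y : Borel Y => N (d k) y) (g := snd)
    (cont_measurable (contN2 (d k))) measurable_snd).
Qed.
End S.
Section pfm.
Local Open Scope ereal_scope.
Context d d' (T1 : measurableType d) (T2 : measurableType d') (R : realType).
Variables (m : probability T1 R) (f : T1 -> T2).
Hypothesis mf : measurable_fun [set: T1] f.

Definition pfm_ (_ : measurable_fun [set: T1] f) := pushforward m f.
Local Notation pfm := (pfm_ mf).

Let pfm0 : pfm set0 = 0.
Proof. by rewrite /pfm /pushforward preimage_set0 measure0. Qed.

Let pfm_ge0 A : 0 <= pfm A.
Proof. by apply: measure_ge0. Qed.

Let pfm_sigma_additive : semi_sigma_additive pfm.
Proof.
move=> F mF tF mUF; rewrite /pfm /pushforward preimage_bigcup.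
apply: measure_semi_sigma_additive.
- by move=> n; rewrite -[X in measurable X]setTI; exact: mf.
- apply/trivIsetP => /= i j _ _ ij; rewrite -preimage_setI.
  by move/trivIsetP : tF => /(_ _ _ _ _ ij) ->//; rewrite preimage_set0.
- by rewrite -preimage_bigcup -[X in measurable X]setTI; exact: mf.
Qed.

HB.instance Definition _ := isMeasure.Build _ _ _ pfm pfm0 pfm_ge0 pfm_sigma_additive.

Let pfm_setT : pfm setT = 1.
Proof. by rewrite /pfm /pushforward preimage_setT probability_setT. Qed.

HB.instance Definition _ := Measure_isProbability.Build _ _ _ pfm pfm_setT.
End pfm.
Arguments pfm_ {d d' T1 T2 R} m {f} mf.
Lemma pfmE d d' (T1 : measurableType d) (T2 : measurableType d') (R : realType)
  (m : probability T1 R) (f : T1 -> T2) (mf : measurable_fun [set: T1] f) A :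
  pfm_ m mf A = m (f @^-1` A).
Proof. by []. Qed.


Section gen.
Local Open Scope ereal_scope.
Context d (U : measurableType d) (R : realType).
Variable E : nat -> set U.
Hypothesis mE : forall k, measurable (E k).
Hypothesis tE : trivIset setT E.
Hypothesis cE : \bigcup_k E k = setT.

Lemma tE' i j x : E i x -> E j x -> i = j.
Proof.
move=> Ei Ej; apply/eqP/negPn/negP => ij.
by move/trivIsetP : tE => /(_ i j I I ij) /seteqP[/(_ x (conj Ei Ej))].
Qed.

Arguments tE' {i j x}.
Lemma inE' x : exists i, E i x.
Proof. by have : setT x by []; rewrite -cE => -[i _ ?]; exists i. Qed.

Lemma setI_cover (A : set U) : A = \bigcup_i (A `&` E i).
Proof.
apply/seteqP; split => [x Ax|x [i _ []//]].
by have [i Ei] := inE' x; exists i.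
Qed.

Lemma triv_setI (A : set U) : trivIset setT (fun i => A `&` E i).
Proof.
apply/trivIsetP => i j _ _ ij; apply/seteqP; split => // x [[_ Ei] [_ Ej]].
by move: ij; rewrite (tE' Ei Ej) eqxx.
Qed.

Lemma measure_cover (mu : {measure set U -> \bar R}) (A : set U) : measurable A ->
  mu A = \sum_(i <oo) mu (A `&` E i).
Proof.
move=> mA; rewrite {1}(setI_cover A) measure_semi_bigcup //.
- by move=> i; exact: measurableI.
- exact: triv_setI.
- by rewrite -setI_cover.
Qed.

Lemma row_cover (A : set U) : A `*` setT = \bigcup_j (A `*` E j).
Proof.
apply/seteqP; split => [[x y] [/= Ax _]|[x y] [j _ [/= ? _]]//].
by have [j Ej] := inE' y; exists j.
Qed.

Lemma col_cover : (setT : set (U * U)) = \bigcup_i (E i `*` setT).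
Proof.
apply/seteqP; split => [[x y] _|//].
by have [i Ei] := inE' x; exists i.
Qed.

Lemma triv_row (A : set U) : trivIset setT (fun j => A `*` E j).
Proof.
apply/trivIsetP => i j _ _ ij; apply/seteqP; split => // -[x y] [[_ /= Ei] [_ /= Ej]].
by move: ij; rewrite (tE' Ei Ej) eqxx.
Qed.

Lemma triv_col : trivIset setT (fun i => E i `*` (setT : set U)).
Proof.
apply/trivIsetP => i j _ _ ij; apply/seteqP; split => // -[x y] [[/= Ei _] [/= Ej _]].
by move: ij; rewrite (tE' Ei Ej) eqxx.
Qed.

Lemma measure_row (mu : {measure set (U * U) -> \bar R}) (A : set U) : measurable A ->
  mu (A `*` setT) = \sum_(j <oo) mu (A `*` E j).
Proof.
move=> mA; rewrite row_cover measure_semi_bigcup //.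
- by move=> j; exact: measurableX.
- exact: triv_row.
- by rewrite -row_cover; exact: measurableX.
Qed.

Lemma col_cover2 (A : set U) : setT `*` A = \bigcup_i (E i `*` A).
Proof.
apply/seteqP; split => [[x y] [/= _ Ay]|[x y] [j _ [/= _ ?]]//].
by have [i Ei] := inE' x; exists i.
Qed.

Lemma triv_col2 (A : set U) : trivIset setT (fun i => E i `*` A).
Proof.
apply/trivIsetP => i j _ _ ij; apply/seteqP; split => // -[x y] [[/= Ei _] [/= Ej _]].
by move: ij; rewrite (tE' Ei Ej) eqxx.
Qed.

Lemma measure_col (mu : {measure set (U * U) -> \bar R}) (A : set U) : measurable A ->
  mu (setT `*` A) = \sum_(i <oo) mu (E i `*` A).
Proof.
move=> mA; rewrite col_cover2 measure_semi_bigcup //.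
- by move=> j; exact: measurableX.
- exact: triv_col2.
- by rewrite -col_cover2; exact: measurableX.
Qed.

Lemma integral_cover (mu : {measure set (U * U) -> \bar R}) (f : U * U -> \bar R) :
  measurable_fun [set: (U * U)%type] f -> (forall z, 0 <= f z) ->
  \int[mu]_z f z = \sum_(i <oo) \sum_(j <oo) \int[mu]_(z in E i `*` E j) f z.
Proof.
move=> mf f0.
rewrite col_cover ge0_integral_bigcup //.
- apply: eq_eseriesr => i _.
  rewrite row_cover ge0_integral_bigcup //.
  + by move=> j; exact: measurableX.
  + exact: measurable_funS mf.
  + exact: triv_row.
- by move=> i; exact: measurableX.
- exact: measurable_funS mf.
- exact: triv_col.
Qed.

End gen.
Lemma eseries_single (R : realType) (f : nat -> \bar R) i :
  (forall k, k != i -> f k = 0%E) -> (0 <= f i)%E ->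
  (\sum_(k <oo) f k = f i)%E.
Proof.
move=> f0 fi0.
have g0 k : (0 <= f k)%E by have [->//|/f0->] := eqVneq k i.
rewrite (nneseries_split 0 i.+1) //= add0n.
rewrite eseries0 ?adde0; last by move=> k ik _; apply: f0; rewrite gtn_eqF.
rewrite big_nat_recr //= big_nat_cond big1 ?add0e // => k /andP[/andP[_ ki] _].
by apply: f0; rewrite ltn_eqF.
Qed.

Lemma term_le_series (R : realType) (f : nat -> \bar R) j :
  (forall k, 0 <= f k)%E -> (f j <= \sum_(k <oo) f k)%E.
Proof.
move=> f0.
have H := @eseries_single _ (fun k => if k == j then f j else 0%E) j.
rewrite eqxx in H; rewrite -H; last by rewrite f0.
- apply: lee_nneseries => [k _ _|k _]; first by case: ifP.
  by case: eqP => [->//|_]; exact: f0.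
- by move=> k /negbTE ->.
Qed.

Section gamma.
Local Open Scope ereal_scope.
Context d (U : measurableType d) (R : realType).
Variables (a b : probability U R) (E : nat -> set U).
Hypothesis mE : forall k, measurable (E k).
Variable w : nat -> nat -> {nonneg R}.

Definition gam0 := mseries (fun i => mseries (fun j =>
  mscale (w i j) (mrestr (a \x b) (measurableX (mE i) (mE j)))) 0) 0.

Lemma gam0E (E1 E2 : set U) : measurable E1 -> measurable E2 ->
  gam0 (E1 `*` E2) = \sum_(i <oo) \sum_(j <oo)
     ((w i j)%:num%:E * (a (E1 `&` E i) * b (E2 `&` E j))).
Proof.
move=> m1 m2; rewrite /gam0 /mseries; apply: eq_eseriesr => i _.
apply: eq_eseriesr => j _.
transitivity (((w i j)%:num)%:E * (a \x b) ((E1 `*` E2) `&` (E i `*` E j))); first by [].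
by rewrite -setXI product_measure1E //; exact: measurableI.
Qed.

Hypothesis tE : trivIset setT E.
Hypothesis cE : \bigcup_k E k = setT.
Variable c : nat -> nat -> R.
Hypothesis c0 : forall i j, (0 <= c i j)%R.
Hypothesis hrow : forall i, \sum_(j <oo) (c i j)%:E = a (E i).
Hypothesis hcol : forall j, \sum_(i <oo) (c i j)%:E = b (E j).
Hypothesis hw : forall i j,
  (w i j)%:num = (c i j / (fine (a (E i)) * fine (b (E j))))%R.

Let al i := fine (a (E i)).
Let be j := fine (b (E j)).
Let aE i : a (E i) = (al i)%:E.
Proof. by rewrite fineK // fin_num_measure. Qed.
Let bE j : b (E j) = (be j)%:E.
Proof. by rewrite fineK // fin_num_measure. Qed.

Let c_le_al i j : (c i j <= al i)%R.
Proof.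
rewrite -lee_fin -aE -hrow.
by apply: (@term_le_series _ (fun j => (c i j)%:E) j) => k; rewrite lee_fin.
Qed.

Let c_le_be i j : (c i j <= be j)%R.
Proof.
rewrite -lee_fin -bE -hcol.
by apply: (@term_le_series _ (fun i => (c i j)%:E) i) => k; rewrite lee_fin.
Qed.

Let wab i j : ((w i j)%:num * (al i * be j))%R = c i j.
Proof.
rewrite hw -/(al i) -/(be j).
have [a0|a0] := eqVneq (al i) 0%R.
  have := c_le_al i j; rewrite a0 mul0r mulr0 => h.
  by apply/le_anti; rewrite h c0.
have [b0|b0] := eqVneq (be j) 0%R.
  have := c_le_be i j; rewrite b0 mulr0 mulr0 => h.
  by apply/le_anti; rewrite h c0.
by rewrite mulfVK // mulf_neq0.
Qed.

Let disj i k : k != i -> E i `&` E k = set0.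
Proof. by move=> ki; move/trivIsetP : tE => /(_ i k I I); rewrite eq_sym => ->. Qed.

Lemma gam0EE k l : gam0 (E k `*` E l) = (c k l)%:E.
Proof.
rewrite gam0E //.
rewrite (@eseries_single _ _ k); last 2 first.
- move=> i ik; apply: eseries0 => j _ _.
  by rewrite (disj _ _ ik) measure0 mul0e mule0.
- apply: nneseries_ge0 => j _ _; apply: mule_ge0 => //.
  by apply: mule_ge0.
rewrite (@eseries_single _ _ l); last 2 first.
- by move=> j jl; rewrite (disj _ _ jl) measure0 mule0 mule0.
- by apply: mule_ge0 => //; exact: mule_ge0.
by rewrite !setIid aE bE -wab !EFinM.
Qed.

Let wge0 i j : (0 <= (w i j)%:num)%R. Proof. by []. Qed.

Lemma gam0_row (E1 : set U) : measurable E1 -> gam0 (E1 `*` setT) = a E1.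
Proof.
move=> m1; rewrite gam0E // (@measure_cover _ _ _ E mE tE cE a E1 m1).
apply: eq_eseriesr => i _.
have mEi : measurable (E1 `&` E i) by exact: measurableI.
set x := fine (a (E1 `&` E i)).
have xE : a (E1 `&` E i) = x%:E by rewrite fineK // fin_num_measure.
have x0 : (0 <= x)%R by rewrite -lee_fin -xE measure_ge0.
have xle : (x <= al i)%R.
  by rewrite -lee_fin -xE -aE le_measure ?inE //; exact: subIsetr.
transitivity (\sum_(j <oo) (x / al i)%:E * (c i j)%:E).
  apply: eq_eseriesr => j _; rewrite setTI xE bE -!EFinM; congr EFin.
  rewrite -(wab i j).
  have [a0|a0] := eqVneq (al i) 0%R.
    have -> : x = 0%R by apply/le_anti; rewrite x0 -a0 xle.
    by rewrite !(mul0r, mulr0).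
  by field.
rewrite nneseriesZl //; last by move=> j _; rewrite lee_fin.
transitivity x%:E; last exact: (esym xE).
rewrite hrow aE -EFinM; congr EFin.
have [a0|a0] := eqVneq (al i) 0%R.
  have -> : x = 0%R by apply/le_anti; rewrite x0 -a0 xle.
  by rewrite !mul0r.
by rewrite divfK.
Qed.

Lemma gam0_col (E2 : set U) : measurable E2 -> gam0 (setT `*` E2) = b E2.
Proof.
move=> m2; rewrite gam0E // nneseries_interchange; last first.
  by move=> i j; apply: mule_ge0 => //; exact: mule_ge0.
rewrite (@measure_cover _ _ _ E mE tE cE b E2 m2).
apply: eq_eseriesr => j _.
have mEj : measurable (E2 `&` E j) by exact: measurableI.
set x := fine (b (E2 `&` E j)).
have xE : b (E2 `&` E j) = x%:E by rewrite fineK // fin_num_measure.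
have x0 : (0 <= x)%R by rewrite -lee_fin -xE measure_ge0.
have xle : (x <= be j)%R.
  by rewrite -lee_fin -xE -bE le_measure ?inE //; exact: subIsetr.
transitivity (\sum_(i <oo) (x / be j)%:E * (c i j)%:E).
  apply: eq_eseriesr => i _; rewrite setTI xE aE -!EFinM; congr EFin.
  rewrite -(wab i j).
  have [b0|b0] := eqVneq (be j) 0%R.
    have -> : x = 0%R by apply/le_anti; rewrite x0 -b0 xle.
    by rewrite !(mul0r, mulr0).
  by field.
rewrite nneseriesZl //; last by move=> i _; rewrite lee_fin.
transitivity x%:E; last exact: (esym xE).
rewrite hcol bE -EFinM; congr EFin.
have [b0|b0] := eqVneq (be j) 0%R.
  have -> : x = 0%R by apply/le_anti; rewrite x0 -b0 xle.
  by rewrite !mul0r.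
by rewrite divfK.
Qed.

Lemma gam0_setT : gam0 setT = 1.
Proof. by rewrite -setXTT gam0_row // probability_setT. Qed.

End gamma.

Arguments gam0 {d U R} a b {E} mE w.
Section gamP.
Local Open Scope ereal_scope.
Context d (U : measurableType d) (R : realType).
Variables (a b : probability U R) (E : nat -> set U).
Hypothesis mE : forall k, measurable (E k).
Variable w : nat -> nat -> {nonneg R}.
Variable h : gam0 a b mE w setT = 1.

Definition gam (_ : gam0 a b mE w setT = 1) := gam0 a b mE w.
Local Notation G := (gam h).

Let G0 : G set0 = 0.
Proof. exact: (measure0 (gam0 a b mE w)). Qed.
Let G_ge0 A : 0 <= G A.
Proof. exact: (measure_ge0 (gam0 a b mE w)). Qed.
Let G_sa : semi_sigma_additive G.
Proof. rewrite /gam; exact: measure_semi_sigma_additive. Qed.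
HB.instance Definition _ := isMeasure.Build _ _ _ G G0 G_ge0 G_sa.
Let G_setT : G setT = 1. Proof. exact: h. Qed.
HB.instance Definition _ := Measure_isProbability.Build _ _ _ G G_setT.
End gamP.
Arguments gam {d U R a b E mE w}.

Section part.
Variables (R : realType) (Y : completePseudoMetricType R) (N : Y -> Y -> R).
Hypothesis hN : pseudometric N.
Hypothesis cN : continuous ((fun p : Y * Y => N p.1 p.2) : Y * Y -> R^o).
Variables (d : nat -> Y) (r : R).
Hypothesis hd : forall y e, 0 < e -> exists k, N y (d k) < e.
Hypothesis r0 : 0 < r.

Definition Bp k : set (Borel Y) :=
  [set y | N y (d k) < r /\ forall j, (j < k)%N -> ~ N y (d j) < r].

Lemma open_ball_N k : open [set y : Y | N y (d k) < r].
Proof.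
by apply: (open_comp (f:=fun z => N z (d k) : R^o)) (@open_lt _ r) => z _;
  exact: contN1.
Qed.

Lemma mBp k : measurable (Bp k).
Proof.
have -> : Bp k = [set y | N y (d k) < r] `&`
    \bigcap_(j in [set j | (j < k)%N]) ~` [set y | N y (d j) < r].
  by apply/seteqP; split => y [h1 h2]; split.
apply: measurableI; first by apply: borel_open; exact: open_ball_N.
apply: bigcap_measurableType => j _; apply: measurableC.
by apply: borel_open; exact: open_ball_N.
Qed.

Lemma tBp : trivIset setT Bp.
Proof.
apply/trivIsetP => i j _ _ ij; apply/seteqP; split => // y [[hi hi'] [hj hj']].
case: (ltngtP i j) => [lt|gt|eq].
- by case: (hj' i lt hi).
- by case: (hi' j gt hj).
- by move: ij; rewrite eq eqxx.
Qed.

Lemma cBp : \bigcup_k Bp k = setT.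
Proof.
apply/seteqP; split => // y _.
have ex : exists k, N y (d k) < r := hd y r r0.
case: (ex_minnP ex) => k hk hmin; exists k => //; split => // j jk hj.
by have := hmin j hj; rewrite leqNgt jk.
Qed.

End part.

Section Main.
Variables (R : realType) (X Y : completePseudoMetricType R).
Hypothesis hY : polish Y.
Variables (T : X -> Y) (mT : measurable_fun [set: Borel X] (T : Borel X -> Borel Y)).
Variables (N : Y -> Y -> R) (hN : pseudometric N).
Hypothesis cN : continuous ((fun p : Y * Y => N p.1 p.2) : Y * Y -> R^o).
Variables (a b : probability (Borel X) R).

Lemma mpre (A : set (Borel Y)) : measurable A -> measurable (T @^-1` A : set (Borel X)).
Proof. by move=> mA; rewrite -[X in measurable X]setTI; exact: mT. Qed.

Lemma mTT : measurable_fun [set: (Borel X * Borel X)%type]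
  (fun z : Borel X * Borel X => (T z.1, T z.2) : Borel Y * Borel Y).
Proof.
apply: measurable_fun_pair.
  exact: (measurableT_comp mT measurable_fst).
exact: (measurableT_comp mT measurable_snd).
Qed.

Lemma W_le1 (y0 : Y) :
  (Wdist (N : Borel Y -> Borel Y -> R)
        (pushforward a (T : Borel X -> Borel Y))
        (pushforward b (T : Borel X -> Borel Y))
  <= Wdist (fun x x' : Borel X => N (T x) (T x')) a b)%E.
Proof.
apply: le_ereal_inf_tmp => _ [g [ga gb] <-].
apply: ereal_inf_lbound; exists (pfm_ g mTT).
  split.
    move=> A mA.
    transitivity (g ((fun z : Borel X * Borel X => (T z.1, T z.2) : Borel Y * Borel Y) @^-1` (A `*` setT))); first by [].
    rewrite (_ : _ @^-1` _ = (T @^-1` A) `*` setT); last first.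
      by apply/seteqP; split => z /=.
    by rewrite ga //; exact: mpre.
  move=> A mA.
  transitivity (g ((fun z : Borel X * Borel X => (T z.1, T z.2) : Borel Y * Borel Y) @^-1` (setT `*` A))); first by [].
  rewrite (_ : _ @^-1` _ = setT `*` (T @^-1` A)); last first.
    by apply/seteqP; split => z /=.
  by rewrite gb //; exact: mpre.
rewrite /pfm_ ge0_integral_pushforward //.
- exact: mTT.
- by apply/measurable_realfun.measurable_EFinP; exact: (@measurable_cost _ _ _ hN cN hY y0).
- by move=> z _; rewrite lee_fin; case: hN.
Qed.
Lemma W_le2 (y0 : Y) :
  (Wdist (fun x x' : Borel X => N (T x) (T x')) a b <=
   Wdist (N : Borel Y -> Borel Y -> R)
        (pushforward a (T : Borel X -> Borel Y))
        (pushforward b (T : Borel X -> Borel Y)))%E.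
Proof.
apply: le_ereal_inf_tmp => _ [pi [pa pb] <-].
apply/lee_addgt0Pr => e e0.
have [d hd] := @dense_seq _ _ _ hN cN hY y0.
case: (hN) => N0 [Nyy [Nsym Ntri]].
set r := e / 4.
have r0 : 0 < r by rewrite divr_gt0.
pose B := @Bp _ _ N d r.
have mB : forall k, measurable (B k) := @mBp _ _ N cN d r.
have tB : trivIset setT B := @tBp _ _ N d r.
have cB : \bigcup_k B k = setT := @cBp _ _ N d r hd r0.
pose E k : set (Borel X) := T @^-1` B k.
have mE : forall k, measurable (E k) by move=> k; exact: mpre.
have tE : trivIset setT E.
  apply/trivIsetP => i j _ _ ij; rewrite -preimage_setI.
  by move/trivIsetP : tB => /(_ i j I I ij) ->; rewrite preimage_set0.
have cE : \bigcup_k E k = setT by rewrite -preimage_bigcup cB preimage_setT.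
pose c i j := fine (pi (B i `*` B j)).
have c0 i j : 0 <= c i j by apply: fine_ge0; exact: measure_ge0.
have cE' i j : (c i j)%:E = pi (B i `*` B j).
  by rewrite fineK // fin_num_measure //; exact: measurableX.
have hrow i : (\sum_(j <oo) (c i j)%:E = a (E i))%E.
  under eq_eseriesr do rewrite cE'.
  by rewrite -(@measure_row _ _ _ B mB tB cB pi (B i) (mB i)); exact: (pa (B i) (mB i)).
have hcol j : (\sum_(i <oo) (c i j)%:E = b (E j))%E.
  under eq_eseriesr do rewrite cE'.
  by rewrite -(@measure_col _ _ _ B mB tB cB pi (B j) (mB j)); exact: (pb (B j) (mB j)).
pose w i j := NngNum (divr_ge0 (c0 i j)
  (mulr_ge0 (fine_ge0 (measure_ge0 a (E i))) (fine_ge0 (measure_ge0 b (E j))))).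
have hw i j : (w i j)%:num = c i j / (fine (a (E i)) * fine (b (E j))) by [].
have h1 := @gam0_setT _ _ _ a b E mE w tE cE c c0 hrow hcol hw.
pose g := gam h1.
apply: (@le_trans _ _ (\int[g]_z (N (T z.1) (T z.2))%:E)%E).
  apply: ereal_inf_lbound; exists g => //; split.
    by move=> A mA; exact: (@gam0_row _ _ _ a b E mE w tE cE c c0 hrow hcol hw A mA).
  by move=> A mA; exact: (@gam0_col _ _ _ a b E mE w tE cE c c0 hrow hcol hw A mA).
have mcY : measurable_fun [set: (Borel Y * Borel Y)%type]
    (fun z : Borel Y * Borel Y => (N z.1 z.2)%:E).
  by apply/measurable_EFinP; exact: (@measurable_cost _ _ _ hN cN hY y0).
have mcX : measurable_fun [set: (Borel X * Borel X)%type]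
    (fun z : Borel X * Borel X => (N (T z.1) (T z.2))%:E).
  apply/measurable_EFinP.
  exact: (measurableT_comp (@measurable_cost _ _ _ hN cN hY y0) mTT).
have mce : measurable_fun [set: (Borel Y * Borel Y)%type]
    (fun z : Borel Y * Borel Y => (N z.1 z.2 + e)%:E).
  apply/measurable_EFinP; apply: measurable_funD => //.
  exact: (@measurable_cost _ _ _ hN cN hY y0).
have -> : (\int[pi]_z (N z.1 z.2)%:E + e%:E =
    \int[pi]_z (N z.1 z.2 + e)%:E)%E.
  under [RHS]eq_integral do rewrite EFinD.
  rewrite ge0_integralD //.
  - have := integral_cst pi (@measurableT _ (Borel Y * Borel Y)%type) e%:E.
    rewrite /cst => ->; f_equal.
    by rewrite -[LHS]mule1; f_equal; exact/esym/probability_setT.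
  all: try by move=> z _; rewrite lee_fin.
  all: try by move=> z _; rewrite lee_fin ltW.
  all: try exact: mcY.
  all: try exact: measurable_cst.
have IC1 := @integral_cover _ _ _ E mE tE cE g _ mcX.
have IC2 := @integral_cover _ _ _ B mB tB cB pi _ mce.
rewrite /= in IC1 IC2.
have {}IC1 := IC1 (fun z => ltac:(by rewrite lee_fin)).
have {}IC2 := IC2 (fun z => ltac:(by rewrite lee_fin addr_ge0 // ltW)).
rewrite IC2 /g IC1.
apply: lee_nneseries => [i _ _|i _].
  by apply: nneseries_ge0 => j _ _; apply: integral_ge0 => z _; rewrite lee_fin.
apply: lee_nneseries => [j _ _|j _].
  by apply: integral_ge0 => z _; rewrite lee_fin.
have mEE : measurable (E i `*` E j) by exact: measurableX.
have mBB : measurable (B i `*` B j) by exact: measurableX.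
pose v := N (d i) (d j) + 2 * r.
apply: (@le_trans _ _ (\int[g]_(z in E i `*` E j) v%:E)%E).
  apply: ge0_le_integral => //.
  - by move=> z _; rewrite lee_fin.
  - exact: measurable_funS mcX.
  - move=> z [/= [h1i _] [h2j _]]; rewrite lee_fin /v.
    have t1 := Ntri (T z.1) (d i) (T z.2).
    have t2 := Ntri (d i) (d j) (T z.2).
    rewrite (Nsym (d j)) in t2.
    lra.
have -> : (\int[g]_(z in E i `*` E j) v%:E = v%:E * (c i j)%:E)%E.
  have := integral_cst g mEE v%:E; rewrite /cst => ->.
  by f_equal; exact: (@gam0EE _ _ _ a b E mE w tE c c0 hrow hcol hw i j).
rewrite cE'.
have := integral_cst pi mBB v%:E; rewrite /cst => <-.
apply: ge0_le_integral => //.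
- move=> z _; rewrite lee_fin /v addr_ge0 //; rewrite mulr_ge0 // ltW //.
- exact: measurable_funS mce.
- move=> z [/= [hi _] [hj _]]; rewrite lee_fin /v.
  have t1 := Ntri (d i) z.1 (d j).
  have t2 := Ntri z.1 z.2 (d j).
  rewrite (Nsym (d i) z.1) in t1.
  have e4 : e = 4 * r by rewrite /r mulrC divfK // pnatr_eq0.
  lra.
Qed.

End Main.

Theorem mainTheorem1 (R : realType) (X Y : completePseudoMetricType R)
  (hX : polish X) (hY : polish Y)
  (T : X -> Y) (mT : measurable_fun [set: Borel X] (T : Borel X -> Borel Y))
  (N : Y -> Y -> R) (hN : pseudometric N)
  (cN : continuous ((fun p : Y * Y => N p.1 p.2) : Y * Y -> R^o))
  (bN : exists M : R, forall y y' : Y, N y y' <= M)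
  (a b : probability (Borel X) R) :
  Wdist (N : Borel Y -> Borel Y -> R)
        (pushforward a (T : Borel X -> Borel Y))
        (pushforward b (T : Borel X -> Borel Y))
  = Wdist (fun x x' : Borel X => N (T x) (T x')) a b.
Proof.
have [x0 _] : exists x : X, True.
  case: (pselect (exists x : X, True)) => // nx.
  have h0 : [set: Borel X] = set0.
    by apply/seteqP; split => // x _; case: nx; exists x.
  have := probability_setT a; rewrite h0 measure0 => h.
  by move: (@lte01 R); rewrite -h ltxx.
apply/le_anti/andP; split.
  exact: (@W_le1 _ _ _ hY _ mT _ hN cN a b (T x0)).
exact: (@W_le2 _ _ _ hY _ mT _ hN cN a b (T x0)).
Qed.
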